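(* Let $S$ be a pool of size $m$ in $[0,1]$, and assume that $\mathrm{err}(S,\mathcal{H}_{\dashv}) \leq k/m$. Then the following procedure finds $\hat{h}$ such that $\mathrm{err}(S,\hat{h}) = \mathrm{err}(S,\mathcal{H}_{\dashv})$ with an auditing complexity of $k+1$: query the labels of the points of $S$ in order from highest to lowest value, stopping once $k+1$ negative labels have been observed, and return a threshold hypothesis in $\mathcal{H}_{\dashv}$ that minimizes the error on the labeled (queried) points.
   Context: The domain is $\mathcal{X}=[0,1]$ with labels in $\{-1,+1\}$. $\mathcal{H}_{\dashv} = \{h_a \mid a \in [0,1]\}$ is the class of thresholds on the line, where the hypothesis with threshold $a$ labels $x$ positive if $x \geq a$ and negative otherwise. For a multiset $S$ of labeled points, $\mathrm{err}(S,h)$ is the fraction of points in $S$ misclassified by $h$, and $\mathrm{err}(S,\mathcal{H}) = \min_{h\in\mathcal{H}}\mathrm{err}(S,h)$. The pool $S$ is given with hidden labels that are revealed only upon querying. The auditing complexity of a procedure is the number of queries it makes on points whose labels are negative (queries returning positive labels are free). *)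

(* Defs.v *)
From HB Require Import structures.
From mathcomp Require Import all_boot all_order all_algebra.
From mathcomp Require Import boolp classical_sets reals.
Set Implicit Arguments. Unset Strict Implicit. Unset Printing Implicit Defensive.
Import Order.TTheory GRing.Theory Num.Theory.
Local Open Scope ring_scope.
Local Open Scope classical_set_scope.

(* A labeled point: (x, label); label true = +1, false = -1. *)
Definition lpoint (R : realType) := (R * bool)%type.

Definition thr (R : realType) (a x : R) : bool := a <= x.

Definition err (R : realType) (S : seq (lpoint R)) (h : R -> bool) : R :=
  (count (fun p : lpoint R => h p.1 != p.2) S)%:R / (size S)%:R.

(* err(S,H_thresholds) = min over a in [0,1] (taken as an infimum;
   the min is attained since only finitely many behaviours exist). *)
Definition errH (R : realType) (S : seq (lpoint R)) : R :=
  inf [set err S (thr a) | a in [set a : R | 0 <= a <= 1]].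

(* Points queried when querying s in order and stopping as soon as
   k+1 negative labels have been observed (or s is exhausted). *)
Fixpoint queried (R : realType) (k : nat) (s : seq (lpoint R)) : seq (lpoint R) :=
  match s with
  | [::] => [::]
  | p :: s' =>
      if p.2 then p :: queried k s'
      else match k with
           | 0 => [:: p]
           | k'.+1 => p :: queried k' s'
           end
  end.

(* Auditing complexity: number of queries returning a negative label. *)
Definition n_neg_queries (R : realType) (Q : seq (lpoint R)) : nat :=
  count (fun p : lpoint R => ~~ p.2) Q.

(* Main.v *)
Require Import Defs.
From HB Require Import structures.
From mathcomp Require Import all_boot all_order all_algebra.
From mathcomp Require Import boolp classical_sets reals.
Import Order.TTheory GRing.Theory Num.Theory.
Local Open Scope ring_scope.

Lemma queried_neg {R : realType} k (s : seq (lpoint R)) :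
  (n_neg_queries (queried k s) <= k.+1)%N.
Proof.
elim: s k => [|p s IH] k //=; rewrite /n_neg_queries.
case: p => x b /=; case: b => /=; first exact: IH.
case: k => [|k] //=; exact: IH.
Qed.

Lemma queried_struct {R : realType} k (s : seq (lpoint R)) :
  sorted (fun p q : lpoint R => q.1 <= p.1) s ->
  exists Rr, s = queried k s ++ Rr /\
   (Rr = [::] \/ exists x0, all (fun r : lpoint R => r.1 <= x0) Rr /\
      (k < count (fun q : lpoint R => ~~ q.2 && ((x0 <= q.1)%R)) (queried k s))%N /\
      has (fun q : lpoint R => q.1 == x0) s).
Proof.
elim: s k => [|p s IH] k /=; first by move=> _; exists [::]; split=> //; left.
move=> Hs.
have Hs' : sorted (fun p q : lpoint R => q.1 <= p.1) s by apply: path_sorted Hs.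
have Hall : all (fun q : lpoint R => q.1 <= p.1) s.
  have := order_path_min (leT:=fun p q : lpoint R => q.1 <= p.1) _ Hs.
  apply=> x y z /= h1 h2; exact: le_trans h2 h1.
have step : forall k', (exists Rr, s = queried k' s ++ Rr /\
   (Rr = [::] \/ exists x0, all (fun r : lpoint R => r.1 <= x0) Rr /\
      (k' < count (fun q : lpoint R => ~~ q.2 && ((x0 <= q.1)%R)) (queried k' s))%N /\
      has (fun q : lpoint R => q.1 == x0) s)) ->
   forall k'', (k' <= k'' <= k'.+1)%N -> (k'' == k'.+1) = ~~ p.2 ->
   exists Rr, p :: s = (p :: queried k' s) ++ Rr /\
   (Rr = [::] \/ exists x0, all (fun r : lpoint R => r.1 <= x0) Rr /\
      (k'' < count (fun q : lpoint R => ~~ q.2 && ((x0 <= q.1)%R)) (p :: queried k' s))%N /\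
      has (fun q : lpoint R => q.1 == x0) (p :: s)).
  move=> k' [Rr [Es HR]] k'' /andP[h1 h2] hk; exists Rr; split; first by rewrite {1}Es.
  case: HR => [->|[x0 [H1 [H2 H3]]]]; first by left.
  right; exists x0.
  split=> //; split; last by rewrite /= H3 orbT.
  have x0p : x0 <= p.1.
    move/hasP: H3 => [q qin /eqP <-]; exact: (allP Hall).
  rewrite /= x0p andbT.
  case: (p.2) hk => /= hk; last by move/eqP: hk => ->.
  by move: hk h2; rewrite leq_eqVlt => -> /= h2; apply: leq_ltn_trans H2; rewrite -ltnS.
case: p Hs Hs' Hall step => x b Hs Hs' Hall step.
move: Hs Hs' Hall step; case: b => Hs Hs' Hall step.
  by apply: (step k (IH k Hs') k); [rewrite leqnn leqnSn | rewrite /= eqn_leq ltnn andbF].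
case: k => [|k].
  exists s; split=> //; right; exists x; split=> //; split; first by rewrite /= lexx.
  by rewrite /= eqxx.
by apply: (step k (IH k Hs') k.+1); rewrite ?leqnSn //= eqxx.
Qed.

Definition cnt {R : realType} (L : seq (lpoint R)) (a : R) : nat :=
  count (fun p : lpoint R => thr a p.1 != p.2) L.

Lemma errH_eq {R : realType} (S : seq (lpoint R)) (a : R) : 0 <= a <= 1 ->
  (forall b, 0 <= b <= 1 -> (cnt S a <= cnt S b)%N) -> err S (thr a) = errH S.
Proof.
move=> ha hmin; rewrite /errH; apply/esym/le_anti/andP; split.
  have hl : has_lbound [set err S (thr b) | b in [set b : R | 0 <= b <= 1]].
    by exists 0 => y [b _ <-]; rewrite /err divr_ge0 ?ler0n.
  have H := ge_inf hl. by apply: H; exists a.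
apply: lb_le_inf; first by exists (err S (thr a)); exists a.
move=> y [b hb <-]; rewrite /err ler_wpM2r ?invr_ge0 ?ler0n // ler_nat.
exact: hmin.
Qed.

Lemma err_le_cnt {R : realType} (L : seq (lpoint R)) (a b : R) : (0 < size L)%N ->
  err L (thr a) <= err L (thr b) -> (cnt L a <= cnt L b)%N.
Proof. by move=> hL; rewrite /err ler_pM2r ?invr_gt0 ?ltr0n // ler_nat. Qed.

Theorem lemma3 (R : realType) (k : nat) (S : seq (lpoint R))
    (s : seq (lpoint R)) (ahat : R) :
  all (fun p : lpoint R => (0 <= p.1) && (p.1 <= 1)) S ->
  errH S <= k%:R / (size S)%:R ->
  (* s : the pool S listed from highest to lowest value (any tie-breaking) *)
  perm_eq s S ->
  sorted (fun p q : lpoint R => q.1 <= p.1) s ->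
  (* ahat : a threshold minimizing the error on the queried points *)
  0 <= ahat <= 1 ->
  (forall b : R, 0 <= b <= 1 ->
     err (queried k s) (thr ahat) <= err (queried k s) (thr b)) ->
  err S (thr ahat) = errH S /\ (n_neg_queries (queried k s) <= k.+1)%N.
Proof.
move=> HS Herr Hperm Hsort Hah Hmin.
split; last exact: queried_neg.
have [Rr [Es HR]] := @queried_struct R k s Hsort.
move: Es HR Hmin; set Q := queried k s => Es HR Hmin.
have cS : forall a, cnt S a = (cnt Q a + cnt Rr a)%N.
  by move=> a; rewrite /cnt -((permP Hperm) _) Es count_cat.
have sS : size S = size s by rewrite (perm_size Hperm).
apply: errH_eq => //.
case: HR => [ER|[x0 [H1 [H2 H3]]]].
  move=> b hb; rewrite !cS ER /cnt /= !addn0.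
  case hQ: (size Q) => [|n].
    by move/size0nil: hQ => ->.
  by apply: err_le_cnt; [rewrite hQ | exact: Hmin].
have low : forall a, a <= x0 -> (k < cnt Q a)%N.
  move=> a ha; apply: (leq_trans H2); apply: sub_count => q /andP[hq hx].
  by rewrite /thr (le_trans ha hx); case: (q.2) hq.
have high : forall a, x0 < a -> cnt Rr a = count (fun p : lpoint R => p.2) Rr.
  move=> a ha; apply: eq_in_count => r hr.
  have hr1 : r.1 <= x0 := allP H1 r hr.
  by rewrite /thr leNgt (le_lt_trans hr1 ha); case: (r.2).
have QP : (0 < size Q)%N.
  exact: leq_trans (leq_trans (ltn0Sn k) H2) (count_size _ _).
have SP : (0 < size S)%N by rewrite sS Es size_cat; apply: leq_trans QP (leq_addr _ _).
have [[astar [hsa hca]]|nex] := pselect (exists a, (0 <= a <= 1) /\ (cnt S a <= k)%N); last first.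
  exfalso.
  have : (k.+1)%:R / (size S)%:R <= errH S.
    apply: lb_le_inf; first by exists (err S (thr 0)); exists 0 => //; rewrite /= lexx ler01.
    move=> y [b hb <-]; rewrite /err ler_wpM2r ?invr_ge0 ?ler0n // ler_nat.
    rewrite ltnNge; apply/negP => hle; apply: nex; exists b; split => //.
  move=> h; have := le_trans h Herr.
  by rewrite ler_pM2r ?invr_gt0 ?ltr0n // ler_nat ltnn.
have hQa : (cnt Q astar <= k)%N by apply: leq_trans hca; rewrite cS leq_addr.
have xa : x0 < astar by rewrite ltNge; apply/negP => /low; rewrite ltnNge hQa.
have hQh : (cnt Q ahat <= cnt Q astar)%N by apply: err_le_cnt => //; exact: Hmin.
have xh : x0 < ahat.
  by rewrite ltNge; apply/negP => /low; rewrite ltnNge (leq_trans hQh hQa).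
have hi : forall b, 0 <= b <= 1 -> x0 < b -> (cnt S ahat <= cnt S b)%N.
  move=> b hb xb; rewrite !cS (high _ xh) (high _ xb) leq_add2r.
  by apply: err_le_cnt => //; exact: Hmin.
move=> b hb; case: (ltP x0 b) => xb; first exact: hi.
apply: (leq_trans (hi _ hsa xa)); apply: (leq_trans hca).
by apply: (leq_trans (ltnW (low _ xb))); rewrite cS leq_addr.
Qed.
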